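(* Let $n,m\ge 3$ and let $G=P_n\square P_m$ be the grid graph. For every $k\ge 3$, no $k$-minimal of $G$ contains more than one corner vertex.
   Context: The grid graph $P_n\square P_m$ has vertex set $\{(i,j):0\le i\le n-1,\ 0\le j\le m-1\}$, with $(i,j)$ adjacent to $(k,l)$ iff $|i-k|+|j-l|=1$; distance $d((i,j),(k,l))=|i-k|+|j-l|$. A vertex $w$ resolves $u,v$ if $d(w,u)\ne d(w,v)$; a set $R$ is resolving if every pair of distinct vertices is resolved by some vertex of $R$; a $k$-minimal is a resolving set $R$ of cardinality $k$ such that no $R\setminus\{x\}$, $x\in R$, is resolving. Corner vertices are the vertices of degree 2, namely $(0,0),(n-1,0),(0,m-1),(n-1,m-1)$. *)

(* Defs.v *)
From mathcomp Require Import all_boot.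
Set Implicit Arguments. Unset Strict Implicit. Unset Printing Implicit Defensive.

Definition grid_vertex (n m : nat) := ('I_n * 'I_m)%type.

Definition absdiff (a b : nat) : nat := (a - b) + (b - a).

Definition grid_dist n m (u v : grid_vertex n m) : nat :=
  absdiff u.1 v.1 + absdiff u.2 v.2.

Definition resolves n m (w u v : grid_vertex n m) : bool :=
  grid_dist w u != grid_dist w v.

Definition resolving n m (R : {set grid_vertex n m}) : Prop :=
  forall u v : grid_vertex n m, u <> v -> exists2 w, w \in R & resolves w u v.

Definition k_minimal n m (k : nat) (R : {set grid_vertex n m}) : Prop :=
  [/\ resolving R, #|R| = k & forall x, x \in R -> ~ resolving (R :\ x)].

Definition is_corner n m (v : grid_vertex n m) : bool :=
  (((v.1 : nat) == 0) || ((v.1 : nat) == n.-1)) &&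
  (((v.2 : nat) == 0) || ((v.2 : nat) == m.-1)).

(* Main.v *)
Require Import Defs.
From mathcomp Require Import all_boot.
From mathcomp Require Import zify.

Lemma ad0 u : absdiff 0 u = u.
Proof. rewrite /absdiff; lia. Qed.
Lemma adT n u : u < n -> absdiff n.-1 u = n.-1 - u.
Proof. rewrite /absdiff; lia. Qed.

Lemma keyA (n m a1 b1 a2 b2 u1 u2 v1 v2 : nat) :
  u1 < n -> v1 < n -> u2 < m -> v2 < m ->
  (a1 = 0 \/ a1 = n.-1) -> (a2 = 0 \/ a2 = n.-1) ->
  (b1 = 0 \/ b1 = m.-1) -> (b2 = 0 \/ b2 = m.-1) ->
  (a1 = a2 /\ b1 <> b2) ->
  absdiff a1 u1 + absdiff b1 u2 = absdiff a1 v1 + absdiff b1 v2 ->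
  absdiff a2 u1 + absdiff b2 u2 = absdiff a2 v1 + absdiff b2 v2 ->
  u1 = v1 /\ u2 = v2.
Proof.
move=> hu1 hv1 hu2 hv2 [->|->] [->|->] [->|->] [->|->] [e ne] H1 H2;
move: H1 H2; rewrite ?ad0 ?(adT _ _ hu1) ?(adT _ _ hv1) ?(adT _ _ hu2) ?(adT _ _ hv2); try lia.
Qed.

Lemma keyB (n m a1 b1 a2 b2 u1 u2 v1 v2 : nat) :
  u1 < n -> v1 < n -> u2 < m -> v2 < m ->
  (a1 = 0 \/ a1 = n.-1) -> (a2 = 0 \/ a2 = n.-1) ->
  (b1 = 0 \/ b1 = m.-1) -> (b2 = 0 \/ b2 = m.-1) ->
  (a1 <> a2 /\ b1 <> b2) ->
  absdiff a1 u1 + absdiff b1 u2 = absdiff a1 v1 + absdiff b1 v2 ->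
  absdiff a2 u1 + absdiff b2 u2 = absdiff a2 v1 + absdiff b2 v2.
Proof.
move=> hu1 hv1 hu2 hv2 [->|->] [->|->] [->|->] [->|->] [e ne] H1;
move: H1; rewrite ?ad0 ?(adT _ _ hu1) ?(adT _ _ hv1) ?(adT _ _ hu2) ?(adT _ _ hv2); lia.
Qed.

Arguments keyA {n m a1 b1 a2 b2 u1 u2 v1 v2}.
Arguments keyB {n m a1 b1 a2 b2 u1 u2 v1 v2}.

Lemma corner_dec n m (c : grid_vertex n m) : is_corner c ->
  ((c.1 : nat) = 0 \/ (c.1 : nat) = n.-1) /\ ((c.2 : nat) = 0 \/ (c.2 : nat) = m.-1).
Proof. by case/andP=> /orP[/eqP->|/eqP->] /orP[/eqP->|/eqP->]; split; auto. Qed.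

Lemma key n m (c1 c2 : grid_vertex n m) :
  is_corner c1 -> is_corner c2 -> c1 != c2 ->
  (forall u v, grid_dist c1 u = grid_dist c1 v -> grid_dist c2 u = grid_dist c2 v -> u = v)
  \/ (forall u v, grid_dist c1 u = grid_dist c1 v -> grid_dist c2 u = grid_dist c2 v).
Proof.
move=> /corner_dec [A1 B1] /corner_dec [A2 B2] neq.
have [ea|na] := eqVneq (c1.1 : nat) c2.1.
  left => -[u1 u2] [v1 v2]; rewrite /grid_dist /= => H1 H2.
  have nb : (c1.2 : nat) <> c2.2.
    move=> eb; move/negP: neq; apply; apply/eqP.
    by case: c1 c2 ea eb {A1 B1 A2 B2 H1 H2} => [x1 y1] [x2 y2] /= /val_inj-> /val_inj->.
  have [] := keyA (ltn_ord u1) (ltn_ord v1) (ltn_ord u2) (ltn_ord v2) A1 A2 B1 B2 (conj ea nb) H1 H2.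
  by move=> /val_inj-> /val_inj->.
have [eb|nb] := eqVneq (c1.2 : nat) c2.2.
  left => -[u1 u2] [v1 v2]; rewrite /grid_dist /= => H1 H2.
  have [] := keyA (ltn_ord u2) (ltn_ord v2) (ltn_ord u1) (ltn_ord v1) B1 B2 A1 A2 (conj eb (elimN eqP na)) _ _; try lia.
  by move=> /val_inj-> /val_inj->.
right => -[u1 u2] [v1 v2]; rewrite /grid_dist /= => H1.
exact: keyB (ltn_ord u1) (ltn_ord v1) (ltn_ord u2) (ltn_ord v2) A1 A2 B1 B2 (conj (elimN eqP na) (elimN eqP nb)) H1.
Qed.

Arguments key {n m c1 c2}.

Theorem proposition1 (n m k : nat) (R : {set grid_vertex n m}) :
  3 <= n -> 3 <= m -> 3 <= k -> k_minimal k R ->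
  #|[set v in R | is_corner v]| <= 1.
Proof.
move=> _ _ hk [res cardR mini].
rewrite leqNgt; apply/negP => /card_gt1P [c1 [c2 [h1 h2 neq]]].
move: h1 h2; rewrite !inE => /andP[r1 k1] /andP[r2 k2].
case: (key k1 k2 neq) => [HA|HB].
- have : 0 < #|R :\: [set c1; c2]|.
    rewrite cardsD cardR.
    have := subset_leq_card (subsetIr R [set c1; c2]).
    rewrite cards2 neq /=; lia.
  case/card_gt0P => x; rewrite !inE => /andP[/norP[nx1 nx2] xR].
  apply: (mini x xR) => u v huv.
  case: (boolP (resolves c1 u v)) => h1.
    by exists c1 => //; rewrite !inE eq_sym nx1 r1.
  case: (boolP (resolves c2 u v)) => h2.
    by exists c2 => //; rewrite !inE eq_sym nx2 r2.
  by exfalso; apply: huv; apply: HA; apply/eqP; [move: h1|move: h2]; rewrite /resolves negbK.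
- apply: (mini c2 r2) => u v huv.
  have [w wR hw] := res u v huv.
  case: (eqVneq w c2) => [ew|nw].
    exists c1; first by rewrite !inE neq r1.
    subst w; apply/eqP => e; move/eqP: hw; apply; exact: HB.
  by exists w => //; rewrite !inE nw wR.
Qed.
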